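(* Let $\mathbb G=V_1\times V_2$ be a step-two Carnot group and $f\in\mathcal A_h(\mathbb G)$. Then $f$ is $[V_1,V_1]$-affine, i.e. for every $(x,z)\in\mathbb G$ and every $y,y'\in V_1$, the map $t\in\mathbb R\mapsto f((x,z)\cdot(0,t[y,y']))=f(x,z+t[y,y'])$ is affine.
   Context: A step-two Carnot group is $\mathbb G=V_1\times V_2$, where $V_1,V_2$ are finite-dimensional real vector spaces with $V_2\neq\{0\}$, equipped with a bilinear skew-symmetric map $[\cdot,\cdot]:V_1\times V_1\to V_2$ with $\operatorname{span}\{[x,x']:x,x'\in V_1\}=V_2$, and group law $(x,z)\cdot(x',z')=(x+x',z+z'+[x,x'])$. $[V_1,V_1]:=\{[x,x']:x,x'\in V_1\}$ (identified with $\{0\}\times[V_1,V_1]$). $\mathcal A_h(\mathbb G)$ is the space of $h$-affine maps $f:\mathbb G\to\mathbb R$, i.e. such that for all $(x,z)\in\mathbb G$, $y\in V_1$, $t\mapsto f((x,z)\cdot(ty,0))$ is affine. *)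

(* Defs.v *)
From mathcomp Require Import all_boot all_order all_algebra.
From mathcomp Require Import reals.
Set Implicit Arguments. Unset Strict Implicit. Unset Printing Implicit Defensive.
Import Order.TTheory GRing.Theory Num.Theory.
Local Open Scope ring_scope.

(* Finite-dimensional real vector spaces V1, V2 are modelled (up to linear
   isomorphism) as row spaces 'rV[R]_n, 'rV[R]_m over a real field R. *)

Section Carnot.
Variables (R : realType) (n m : nat).

Definition is_bracket (B : 'rV[R]_n -> 'rV[R]_n -> 'rV[R]_m) : Prop :=
  (forall (c : R) x x' y, B (c *: x + x') y = c *: B x y + B x' y) /\
  (forall (c : R) x y y', B x (c *: y + y') = c *: B x y + B x y') /\
  (forall x y, B x y = - B y x).

Definition bracket_spans (B : 'rV[R]_n -> 'rV[R]_n -> 'rV[R]_m) : Prop :=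
  forall z : 'rV[R]_m, exists s : seq (R * ('rV[R]_n * 'rV[R]_n)),
    z = \sum_(p <- s) p.1 *: B p.2.1 p.2.2.

Definition gmul (B : 'rV[R]_n -> 'rV[R]_n -> 'rV[R]_m)
    (p q : 'rV[R]_n * 'rV[R]_m) : 'rV[R]_n * 'rV[R]_m :=
  (p.1 + q.1, p.2 + q.2 + B p.1 q.1).

Definition affine_fun (g : R -> R) : Prop :=
  exists a b : R, forall t, g t = a * t + b.

Definition h_affine (B : 'rV[R]_n -> 'rV[R]_n -> 'rV[R]_m)
    (f : 'rV[R]_n * 'rV[R]_m -> R) : Prop :=
  forall (x : 'rV[R]_n) (z : 'rV[R]_m) (y : 'rV[R]_n),
    affine_fun (fun t => f (gmul B (x, z) (t *: y, 0))).

End Carnot.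

(* Main.v *)
Require Import Defs.
From mathcomp Require Import all_boot all_order all_algebra.
From mathcomp Require Import reals.
From mathcomp Require Import lra.
Import GRing.Theory Num.Theory.
Local Open Scope ring_scope.

Section Helpers.
Variables (R : realType) (n m : nat) (B : 'rV[R]_n -> 'rV[R]_n -> 'rV[R]_m).
Hypothesis HB : is_bracket B.

Lemma B0l y : B 0 y = 0.
Proof.
have [Hl _] := HB; have := Hl 1 0 0 y; rewrite !scale1r addr0.
by move/(congr1 (fun v => v - B 0 y)); rewrite subrr addrK => <-.
Qed.
Lemma B0r y : B y 0 = 0.
Proof.
have [_ [Hr _]] := HB; have := Hr 1 y 0 0; rewrite !scale1r addr0.
by move/(congr1 (fun v => v - B y 0)); rewrite subrr addrK => <-.
Qed.
Lemma BDl x x' y : B (x + x') y = B x y + B x' y.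
Proof. by have [Hl _] := HB; have := Hl 1 x x' y; rewrite !scale1r. Qed.
Lemma BDr x y y' : B x (y + y') = B x y + B x y'.
Proof. by have [_ [Hr _]] := HB; have := Hr 1 x y y'; rewrite !scale1r. Qed.
Lemma BZl c x y : B (c *: x) y = c *: B x y.
Proof. by have [Hl _] := HB; have := Hl c x 0 y; rewrite !addr0 B0l addr0. Qed.
Lemma BZr c x y : B x (c *: y) = c *: B x y.
Proof. by have [_ [Hr _]] := HB; have := Hr c x y 0; rewrite !addr0 B0r addr0. Qed.
Lemma BNr x y : B x (- y) = - B x y.
Proof. by rewrite -scaleN1r BZr scaleN1r. Qed.
Lemma BNl x y : B (- x) y = - B x y.
Proof. by rewrite -scaleN1r BZl scaleN1r. Qed.
Lemma Bskew x y : B x y = - B y x.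
Proof. by have [_ [_ H]] := HB; apply: H. Qed.
End Helpers.
Arguments B0l {R n m B} HB.
Arguments B0r {R n m B} HB.
Arguments BDl {R n m B} HB.
Arguments BDr {R n m B} HB.
Arguments BZl {R n m B} HB.
Arguments BZr {R n m B} HB.
Arguments Bskew {R n m B} HB.
Arguments BNl {R n m B} HB.
Arguments BNr {R n m B} HB.

Theorem proposition3p1 (R : realType) (n m : nat)
    (B : 'rV[R]_n -> 'rV[R]_n -> 'rV[R]_m)
    (Hm : (0 < m)%N) (HB : is_bracket B) (Hspan : bracket_spans B)
    (f : 'rV[R]_n * 'rV[R]_m -> R) (Hf : h_affine B f) :
  forall (x : 'rV[R]_n) (z : 'rV[R]_m) (y y' : 'rV[R]_n),
    affine_fun (fun t : R => f (gmul B (x, z) (0, t *: B y y'))).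
Proof.
move=> x z y y'.
have [a1 [b1 H1]] := Hf (x + y') (z + B x y') y.
have [a2 [b2 H2]] := Hf (x - y') (z - B x y') y.
exists ((- a1 + a2) / 2), ((b1 + b2) / 2) => t /=.
have [a [b H]] := Hf x (z + t *: B y y') (y' - t *: y).
have E0 := H 0; have E1 := H 1; have E2 := H (-1).
have e0 : gmul B (x, z) (0, t *: B y y') =
          gmul B (x, z + t *: B y y') (0 *: (y' - t *: y), 0).
  by rewrite /gmul /= scale0r !addr0 (B0r HB).
have e1 : gmul B (x, z + t *: B y y') (1 *: (y' - t *: y), 0) =
          gmul B (x + y', z + B x y') ((- t) *: y, 0).
  rewrite /gmul /= scale1r !addr0; congr pair.
    by rewrite addrA scaleNr.
  rewrite !(BDl HB, BDr HB, BZl HB, BZr HB, BNl HB, BNr HB) (Bskew HB y' y).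
  rewrite !scaleNr !scalerN opprK.
  by rewrite -!addrA; congr (_ + _); rewrite addrCA; congr (_ + _); rewrite addrC.
have e2 : gmul B (x, z + t *: B y y') ((-1) *: (y' - t *: y), 0) =
          gmul B (x - y', z - B x y') (t *: y, 0).
  rewrite /gmul /= scaleN1r !addr0 opprB; congr pair.
    by rewrite [t *: y - y']addrC addrA.
  rewrite !(BDl HB, BDr HB, BZl HB, BZr HB, BNl HB, BNr HB) (Bskew HB y' y).
  rewrite ?scaleNr ?scalerN ?opprK -!addrA; congr (_ + _).
  by rewrite addrC -addrA [RHS]addrCA.
rewrite e0 E0.
have := H1 (- t); have := H2 t; rewrite -e1 -e2 E1 E2 => F2 F1.
lra.
Qed.
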